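(* Assume A2 and let $n\ge 1$. Then $$y_{10^{n-1}}<y_{010^{n-1}}<y_{10^n}\qquad\text{and}\qquad y_{01^n}<y_{101^{n-1}}<y_{01^{n-1}},$$ where $0^k$, $1^k$ denote $k$-fold repetitions of a letter and $0^0=1^0=\epsilon$ (so e.g. $y_{10^0}=y_1$).
   Context: Words are finite strings over $\{0,1\}$; $\epsilon$ is the empty word. Let $\mathcal I\subseteq\mathbb R$ be an interval and $\phi_0,\phi_1:\mathcal I\to\mathcal I$. For a word $w$ put $\phi_w:=\phi_{w_{|w|}}\circ\cdots\circ\phi_{w_1}$ (the first letter is applied first), $\phi_\epsilon=\mathrm{id}$. Assumption A2: for all $x<y$ in $\mathcal I$ and $k\in\{0,1\}$, $\phi_k(x)<\phi_k(y)$ and $\phi_k(y)-\phi_k(x)<y-x$; moreover $\phi_0,\phi_1$ have fixed points $y_0,y_1\in\mathcal I$ with $y_1<y_0$. Under A2, for every non-empty word $w$ the map $\phi_w$ has a unique fixed point in $\mathcal I$, denoted $y_w$. *)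

(* Defs.v *)
From Stdlib Require Import Reals Lra List ClassicalEpsilon.
Open Scope R_scope.

(* Words over {0,1}: false = letter 0, true = letter 1. *)
Definition word := list bool.

Definition is_interval (I : R -> Prop) : Prop :=
  forall x y z, I x -> I z -> x <= y -> y <= z -> I y.

Definition letter_map (phi0 phi1 : R -> R) (b : bool) : R -> R :=
  if b then phi1 else phi0.

(* phi_w = phi_{w_|w|} o ... o phi_{w_1}: first letter applied first. *)
Definition phiw (phi0 phi1 : R -> R) (w : word) (x : R) : R :=
  fold_left (fun acc b => letter_map phi0 phi1 b acc) w x.

Definition A2 (I : R -> Prop) (phi0 phi1 : R -> R) : Prop :=
  is_interval I /\
  (forall k x, I x -> I (letter_map phi0 phi1 k x)) /\
  (forall k x y, I x -> I y -> x < y ->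
      letter_map phi0 phi1 k x < letter_map phi0 phi1 k y /\
      letter_map phi0 phi1 k y - letter_map phi0 phi1 k x < y - x) /\
  (exists y0 y1, I y0 /\ I y1 /\ phi0 y0 = y0 /\ phi1 y1 = y1 /\ y1 < y0).

(* y_w: the (unique, under A2, for nonempty w) fixed point of phi_w in I. *)
Definition yfix (I : R -> Prop) (phi0 phi1 : R -> R) (w : word) : R :=
  epsilon (inhabits 0) (fun y => I y /\ phiw phi0 phi1 w y = y).

Definition rep (b : bool) (k : nat) : word := repeat b k.

(* Main.v *)
Require Import Defs.
From Stdlib Require Import Reals List.
From Stdlib Require Import Lra Lia ClassicalEpsilon.
Open Scope R_scope.

Definition pres (I : R -> Prop) (F : R -> R) := forall x, I x -> I (F x).
Definition mono_on (I : R -> Prop) (F : R -> R) :=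
  forall x y, I x -> I y -> x < y -> F x < F y.
Definition ne_on (I : R -> Prop) (F : R -> R) :=
  forall x y, I x -> I y -> x < y -> F y - F x <= y - x.
Definition sc_on (I : R -> Prop) (F : R -> R) :=
  forall x y, I x -> I y -> x < y -> F y - F x < y - x.

Lemma phiw_cons p0 p1 b w x :
  phiw p0 p1 (b :: w) x = phiw p0 p1 w (letter_map p0 p1 b x).
Proof. reflexivity. Qed.

Lemma phiw_snoc p0 p1 w b x :
  phiw p0 p1 (w ++ b :: nil) x = letter_map p0 p1 b (phiw p0 p1 w x).
Proof. unfold phiw. rewrite fold_left_app. reflexivity. Qed.

Lemma rep_snoc b m : rep b (S m) = rep b m ++ b :: nil.
Proof.
  unfold rep. induction m; simpl in *; [reflexivity|]. f_equal. exact IHm.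
Qed.

Lemma mono_le I F x y : mono_on I F -> I x -> I y -> x <= y -> F x <= F y.
Proof.
  intros H hx hy hxy. destruct (Rle_lt_or_eq_dec _ _ hxy) as [h|h].
  - left. now apply H.
  - subst. lra.
Qed.

Section Generic.
End Generic.

Lemma fix_unique I F p q : sc_on I F -> I p -> I q -> F p = p -> F q = q -> p = q.
Proof.
  intros H hp hq fp fq. destruct (Rtotal_order p q) as [h|[h|h]]; auto.
  - specialize (H p q hp hq h). lra.
  - specialize (H q p hq hp h). lra.
Qed.

Lemma below_up I F p x : sc_on I F -> I p -> F p = p -> I x -> x < p -> x < F x.
Proof. intros H hp fp hx h. specialize (H x p hx hp h). lra. Qed.

Lemma above_down I F p x : sc_on I F -> I p -> F p = p -> I x -> p < x -> F x < x.
Proof. intros H hp fp hx h. specialize (H p x hp hx h). lra. Qed.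

Lemma up_below I F p x : sc_on I F -> I p -> F p = p -> I x -> x < F x -> x < p.
Proof.
  intros H hp fp hx h. destruct (Rtotal_order x p) as [h'|[h'|h']]; auto.
  - subst. lra.
  - pose proof (above_down I F p x H hp fp hx h'). lra.
Qed.

Lemma down_above I F p x : sc_on I F -> I p -> F p = p -> I x -> F x < x -> p < x.
Proof.
  intros H hp fp hx h. destruct (Rtotal_order x p) as [h'|[h'|h']]; auto.
  - pose proof (below_up I F p x H hp fp hx h'). lra.
  - subst. lra.
Qed.

Lemma props_all I p0 p1 : A2 I p0 p1 -> forall w,
  pres I (phiw p0 p1 w) /\ mono_on I (phiw p0 p1 w) /\ ne_on I (phiw p0 p1 w).
Proof.
  intros [hI [hp [hm _]]] w. induction w as [|b w [IHp [IHm IHn]]].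
  - repeat split; unfold pres, mono_on, ne_on; simpl; intros; auto; lra.
  - repeat split; unfold pres, mono_on, ne_on; intros; rewrite ?phiw_cons.
    + apply IHp, hp; auto.
    + destruct (hm b x y H H0 H1). apply IHm; auto.
    + destruct (hm b x y H H0 H1). pose proof (IHn _ _ (hp b x H) (hp b y H0) H2). lra.
Qed.

Lemma sc_cons I p0 p1 b w : A2 I p0 p1 -> sc_on I (phiw p0 p1 (b :: w)).
Proof.
  intros hA. pose proof (props_all I p0 p1 hA w) as [hP [hM hN]].
  destruct hA as [hI [hp [hm _]]].
  intros x y hx hy hxy. rewrite !phiw_cons.
  destruct (hm b x y hx hy hxy).
  pose proof (hN _ _ (hp b x hx) (hp b y hy) H). lra.
Qed.

Lemma J_inv I p0 p1 y0 y1 : A2 I p0 p1 -> I y0 -> I y1 -> p0 y0 = y0 -> p1 y1 = y1 ->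
  y1 < y0 -> forall w x, y1 <= x <= y0 -> y1 <= phiw p0 p1 w x <= y0.
Proof.
  intros hA hy0 hy1 f0 f1 hlt.
  assert (hA' := hA). destruct hA' as [hI [hp [hm _]]].
  assert (IJ : forall x, y1 <= x <= y0 -> I x).
  { intros x hx. apply (hI y1 x y0); tauto. }
  assert (L : forall b x, y1 <= x <= y0 -> y1 <= letter_map p0 p1 b x <= y0).
  { intros b x hx. assert (hmb : mono_on I (letter_map p0 p1 b)).
    { intros u v hu hv huv. now apply hm. }
    pose proof (mono_le I _ y1 x hmb hy1 (IJ x hx) (proj1 hx)).
    pose proof (mono_le I _ x y0 hmb (IJ x hx) hy0 (proj2 hx)).
    destruct b; simpl in *.
    - destruct (hm true y1 y0 hy1 hy0 hlt). simpl in *. lra.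
    - destruct (hm false y1 y0 hy1 hy0 hlt). simpl in *. lra. }
  induction w as [|b w IH]; intros x hx; [simpl; lra|].
  rewrite phiw_cons. apply IH, L, hx.
Qed.

Lemma exists_fix I p0 p1 b w : A2 I p0 p1 ->
  exists p, I p /\ phiw p0 p1 (b :: w) p = p.
Proof.
  intros hA. assert (hA' := hA).
  destruct hA' as [hI [hp [hm [y0 [y1 [hy0 [hy1 [f0 [f1 hlt]]]]]]]]].
  set (F := phiw p0 p1 (b :: w)).
  assert (IJ : forall x, y1 <= x <= y0 -> I x).
  { intros x hx. apply (hI y1 x y0); tauto. }
  assert (HJ : forall x, y1 <= x <= y0 -> y1 <= F x <= y0).
  { intros. now apply (J_inv I p0 p1 y0 y1). }
  pose proof (props_all I p0 p1 hA (b :: w)) as [_ [hM _]].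
  set (E := fun x => y1 <= x <= y0 /\ x <= F x).
  assert (hb : bound E). { exists y0. intros x [hx _]. lra. }
  assert (he : exists x, E x).
  { exists y1. split; [lra|]. apply HJ; lra. }
  destruct (completeness E hb he) as [s [hub hl]].
  assert (hs : y1 <= s <= y0).
  { split.
    - apply hub. split; [lra|]. apply HJ; lra.
    - apply hl. intros x [hx _]. lra. }
  assert (h1 : s <= F s).
  { apply hl. intros x [hx hxF].
    pose proof (mono_le I F x s hM (IJ x hx) (IJ s hs) (hub x (conj hx hxF))). lra. }
  assert (h2 : F s <= s).
  { apply hub. split; [apply HJ; exact hs|].
    apply (mono_le I F); auto; try (apply IJ, HJ, hs). }
  exists s. split; [apply IJ, hs| lra].
Qed.

Lemma Yspec I p0 p1 b w : A2 I p0 p1 ->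
  I (yfix I p0 p1 (b :: w)) /\ phiw p0 p1 (b :: w) (yfix I p0 p1 (b :: w)) = yfix I p0 p1 (b :: w).
Proof.
  intros hA. unfold yfix. apply epsilon_spec. now apply exists_fix.
Qed.

Theorem mainTheorem5 (I : R -> Prop) (phi0 phi1 : R -> R) (n : nat)
  (hA2 : A2 I phi0 phi1) (hn : (1 <= n)%nat) :
  let y := yfix I phi0 phi1 in
  (y (true :: rep false (n - 1)) < y (false :: true :: rep false (n - 1)) /\
   y (false :: true :: rep false (n - 1)) < y (true :: rep false n)) /\
  (y (false :: rep true n) < y (true :: false :: rep true (n - 1)) /\
   y (true :: false :: rep true (n - 1)) < y (false :: rep true (n - 1))).
Proof.
  intros y. destruct n as [|m]; [lia|]. replace (S m - 1)%nat with m by lia.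
  assert (hA := hA2).
  destruct hA as [hI [hp [hm [y0 [y1 [hy0 [hy1 [f0 [f1 hlt]]]]]]]]].
  set (P := phiw phi0 phi1).
  assert (sc0 : sc_on I phi0). { intros u v hu hv huv. exact (proj2 (hm false u v hu hv huv)). }
  assert (sc1 : sc_on I phi1). { intros u v hu hv huv. exact (proj2 (hm true u v hu hv huv)). }
  assert (ip0 : pres I phi0). { intros u hu. exact (hp false u hu). }
  assert (ip1 : pres I phi1). { intros u hu. exact (hp true u hu). }
  assert (PP : forall w, pres I (P w) /\ mono_on I (P w)).
  { intros w. destruct (props_all I phi0 phi1 hA2 w) as [a [b _]]. split; assumption. }
  assert (hcons : forall b w x, P (b :: w) x = P w (letter_map phi0 phi1 b x)) by reflexivity.
  assert (r0 : forall k, P (rep false k) y0 = y0).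
  { induction k; [reflexivity|]. simpl rep. rewrite hcons. simpl letter_map. now rewrite f0. }
  assert (r1 : forall k, P (rep true k) y1 = y1).
  { induction k; [reflexivity|]. simpl rep. rewrite hcons. simpl letter_map. now rewrite f1. }
  assert (Ysp : forall b w, I (y (b :: w)) /\ P (b :: w) (y (b :: w)) = y (b :: w)).
  { intros. apply Yspec; auto. }
  assert (SC : forall b w, sc_on I (P (b :: w))). { intros. apply sc_cons; auto. }
  split.
  -
    set (w1 := true :: rep false m). set (w2 := false :: w1).
    destruct (Ysp true (rep false m)) as [Ia Fa]. fold w1 in Ia, Fa.
    destruct (Ysp false w1) as [Ic Fc]. fold w2 in Ic, Fc.
    set (a := y w1) in *. set (c := y w2) in *.
    assert (H1 : P w1 y0 < y0).
    { unfold w1. rewrite hcons. simpl letter_map. rewrite <- (r0 m) at 2.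
      apply (proj2 (PP _)); auto. apply above_down with (I := I) (p := y1); auto. }
    assert (ha : a < y0).
    { apply (down_above I (P w1) a y0); auto. apply SC. }
    assert (hc : c < y0).
    { apply (down_above I (P w2) c y0); auto. apply SC.
      unfold w2. rewrite hcons. simpl letter_map. now rewrite f0. }
    split.
    + apply (up_below I (P w2) c a); auto. apply SC.
      unfold w2. rewrite hcons. simpl letter_map. rewrite <- Fa at 1.
      apply (proj2 (PP _)); auto. apply below_up with (I := I) (p := y0); auto.
    + assert (He : y (true :: rep false (S m)) = phi0 c).
      { destruct (Ysp true (rep false (S m))) as [Ie Fe].
        apply (fix_unique I (P (true :: rep false (S m)))); auto.
        rewrite rep_snoc. change (true :: rep false m ++ false :: nil) with (w1 ++ false :: nil).
        unfold P. rewrite phiw_snoc. simpl letter_map. f_equal. exact Fc. }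
      rewrite He. apply below_up with (I := I) (p := y0); auto.
  -
    set (v1 := false :: rep true m). set (v2 := true :: v1).
    destruct (Ysp false (rep true m)) as [Ib Fb]. fold v1 in Ib, Fb.
    destruct (Ysp true v1) as [Id Fd]. fold v2 in Id, Fd.
    set (b := y v1) in *. set (d := y v2) in *.
    assert (H1 : y1 < P v1 y1).
    { unfold v1. rewrite hcons. simpl letter_map. rewrite <- (r1 m) at 1.
      apply (proj2 (PP _)); auto. apply below_up with (I := I) (p := y0); auto. }
    assert (hb : y1 < b).
    { apply (up_below I (P v1) b y1); auto. apply SC. }
    assert (hd : y1 < d).
    { apply (up_below I (P v2) d y1); auto. apply SC.
      unfold v2. rewrite hcons. simpl letter_map. now rewrite f1. }
    split.
    + assert (He : y (false :: rep true (S m)) = phi1 d).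
      { destruct (Ysp false (rep true (S m))) as [Ie Fe].
        apply (fix_unique I (P (false :: rep true (S m)))); auto.
        rewrite rep_snoc. change (false :: rep true m ++ true :: nil) with (v1 ++ true :: nil).
        unfold P. rewrite phiw_snoc. simpl letter_map. f_equal. exact Fd. }
      rewrite He. apply above_down with (I := I) (p := y1); auto.
    + apply (down_above I (P v2) d b); auto. apply SC.
      unfold v2. rewrite hcons. simpl letter_map. rewrite <- Fb at 2.
      apply (proj2 (PP _)); auto. apply above_down with (I := I) (p := y1); auto.
Qed.
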